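(* Let $n$ be a nonnegative integer and $a,b\in\mathbb{C}$ such that all expressions below are defined (no lower parameter zero or a negative integer). Then \[ \left[{}_3F_2\!\left(\left.{-\frac{b}{2}-n,\frac{1-b}{2}-n,-a-2n \atop -b-2n,1-b-n}\right| 4\right)\right]_n =\frac{(-1)^n(1+a)_{2n}}{n!\,(1+a)_n}\,{}_4F_3\!\left(\left.{-n,\frac{1+a-b}{2},\frac{2+a-b}{2},1 \atop 1+a-b,1-b-n,1+a+n}\right| 4\right). \]
   Context: For $a\in\mathbb{C}$, $(a)_0=1$ and $(a)_k=a(a+1)\cdots(a+k-1)$ for $k\ge1$. The hypergeometric series is ${}_rF_s\!\left(\left.{\alpha_1,\ldots,\alpha_r\atop \beta_1,\ldots,\beta_s}\right|z\right)=\sum_{k\ge0}\frac{(\alpha_1)_k\cdots(\alpha_r)_k}{k!(\beta_1)_k\cdots(\beta_s)_k}z^k$, with no lower parameter zero or a negative integer; it is a finite sum when an upper parameter is $-n$. The bracket $\left[{}_rF_s(\cdots|z)\right]_n$ denotes the sum of the first $n+1$ terms, $\sum_{k=0}^{n}\frac{(\alpha_1)_k\cdots(\alpha_r)_k}{k!(\beta_1)_k\cdots(\beta_s)_k}z^k$. *)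

(* Defs.v *)
From mathcomp Require Import all_boot all_order all_algebra.
From mathcomp Require Import complex.
From mathcomp Require Import reals.
Set Implicit Arguments. Unset Strict Implicit. Unset Printing Implicit Defensive.
Import Order.TTheory GRing.Theory Num.Theory.
Local Open Scope ring_scope.

Definition poch {F : fieldType} (a : F) (k : nat) : F :=
  \prod_(i < k) (a + i%:R).

Definition hyp_term {F : fieldType} (al be : seq F) (z : F) (k : nat) : F :=
  (\prod_(x <- al) poch x k) / (k`!%:R * \prod_(y <- be) poch y k) * z ^+ k.

Definition hypF_trunc {F : fieldType} (al be : seq F) (z : F) (n : nat) : F :=
  \sum_(0 <= k < n.+1) hyp_term al be z k.

Definition admissible_lower {F : fieldType} (b : F) : Prop :=
  forall m : nat, b <> - m%:R.

(* Main.v *)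
Require Import Defs.
From mathcomp Require Import all_boot all_order all_algebra.
From mathcomp Require Import complex.
From mathcomp Require Import reals.
From mathcomp.algebra_tactics Require Import ring.
From mathcomp Require Import zify.
Import GRing.Theory Num.Theory.
Local Open Scope ring_scope.
Ltac fld := field; do ?(apply/andP; split) => //.

Section Poch.
Variable F : numFieldType.
Implicit Types x y : F.

Lemma pochS x k : poch x k.+1 = poch x k * (x + k%:R).
Proof. by rewrite /poch big_ord_recr. Qed.

Lemma pochSl x k : poch x k.+1 = x * poch (x + 1) k.
Proof.
rewrite /poch big_ord_recl addr0; congr (_ * _).
by apply: eq_bigr => i _; rewrite /= /bump /= add1n -nat1r addrA.
Qed.

Lemma poch0 x : poch x 0 = 1.
Proof. by rewrite /poch big_ord0. Qed.

Lemma pochD x m k : poch x (m + k) = poch x m * poch (x + m%:R) k.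
Proof.
elim: k => [|k IH]; first by rewrite addn0 poch0 mulr1.
by rewrite addnS !pochS IH natrD addrA mulrA.
Qed.

Lemma sgn2 k : (-1) ^+ k * (-1) ^+ k = 1 :> F.
Proof. by rewrite -exprD addnn -mul2n exprM sqrrN expr1n expr1n. Qed.

Lemma pochR x m : (-1) ^+ m * poch x m = poch (- x - m%:R + 1) m.
Proof.
elim: m => [|m IH]; first by rewrite !poch0 mulr1.
rewrite [in LHS]pochS [in RHS]pochSl.
have -> : - x - m.+1%:R + 1 + 1 = - x - m%:R + 1 by rewrite -natr1; ring.
rewrite -IH -natr1 exprS; ring.
Qed.

Lemma poch1 k : poch 1 k = k`!%:R :> F.
Proof.
elim: k => [|k IH]; first by rewrite poch0.
by rewrite pochS IH factS natrM -natr1 mulrC addrC.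
Qed.

Lemma fact_neq0 k : k`!%:R != 0 :> F.
Proof. by rewrite pnatr_eq0 -lt0n fact_gt0. Qed.

Lemma pochN n k : (k <= n)%N ->
  poch (- n%:R) k * (n - k)`!%:R = (-1) ^+ k * n`!%:R :> F.
Proof.
move=> kn.
have h1 : n`!%:R = (n - k)`!%:R * poch (1 + (n - k)%:R) k :> F.
  by rewrite -!poch1 -pochD subnK.
have h2 : - (1 + (n - k)%:R) - k%:R + 1 = - n%:R :> F.
  by rewrite natrB //; ring.
by rewrite h1 -h2 -pochR; ring.
Qed.

Lemma poch_fact l s : poch (l%:R + 1) s * l`!%:R = (l + s)`!%:R :> F.
Proof. by rewrite -!poch1 pochD mulrC addrC. Qed.

Lemma adm_poch x k : admissible_lower x -> poch x k != 0.
Proof.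
move=> h; rewrite /poch; apply/prodf_neq0 => i _.
rewrite addr_eq0; apply/eqP; exact: h.
Qed.

Lemma poch_dup x k :
  poch (x / 2%:R) k * poch ((x + 1) / 2%:R) k * 4%:R ^+ k = poch x k.*2.
Proof.
elim: k => [|k IH]; first by rewrite !poch0 !mulr1.
rewrite doubleS !pochS -IH exprS -natr1 [in RHS]natr1 -!muln2 !natrM.
have h2 : (2%:R : F) != 0 by rewrite pnatr_eq0.
by field.
Qed.
End Poch.

Section V.
Variable F : numFieldType.
Implicit Types x y : F.

Lemma vand x y n : poch (x + y) n =
  \sum_(i < n.+1) poch x i * poch y (n - i) *+ 'C(n, i).
Proof.
elim: n => [|n IH]; first by rewrite big_ord_recl big_ord0 !poch0 /= mulr1 addr0.
rewrite pochS IH big_distrl /=.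
transitivity (\sum_(i < n.+1) (poch x i.+1 * poch y (n - i) *+ 'C(n, i)
   + poch x i * poch y (n.+1 - i) *+ 'C(n, i))).
  apply: eq_bigr => i _.
  rewrite subSn ?leq_ord // pochS [poch y (n - i).+1]pochS natrB ?leq_ord //.
  ring.
rewrite big_split /= [RHS]big_ord_recl /=.
under [X in _ = _ + X]eq_bigr do rewrite /bump leq0n add1n subSS binS mulrnDr.
rewrite big_split /= [X in _ = _ + X]addrC [RHS]addrCA; congr (_ + _).
transitivity (\sum_(i < n.+2) poch x i * poch y (n.+1 - i) *+ 'C(n, i)).
  by rewrite [RHS]big_ord_recr /= bin_small // mulr0n addr0.
rewrite big_ord_recl /= !bin0 !subn0; congr (_ + _).
Qed.


Lemma vandF x y n : poch (x + y) n / n`!%:R =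
  \sum_(0 <= i < n.+1) poch x i / i`!%:R * (poch y (n - i) / (n - i)`!%:R).
Proof.
rewrite vand big_distrl /= big_mkord; apply: eq_bigr => i _.
rewrite -mulr_natr -(bin_fact (leq_ord i)) !natrM.
have h1 := fact_neq0 F i; have h2 := fact_neq0 F (n - i).
have h3 : 'C(n, i)%:R != 0 :> F by rewrite pnatr_eq0 -lt0n bin_gt0 leq_ord.
by fld.
Qed.

Lemma poch_neq0_split (g : F) s m : (s <= m)%N -> poch g m != 0 ->
  poch g s != 0 /\ poch (g + s%:R) (m - s) != 0.
Proof.
move=> sm; rewrite -{1}(subnKC sm) pochD mulf_eq0 negb_or => /andP[h1 h2].
by [].
Qed.

Lemma chu m (b g : F) : poch g m != 0 ->
  \sum_(0 <= s < m.+1) poch (- m%:R) s * poch b s / (s`!%:R * poch g s)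
  = poch (g - b) m / poch g m.
Proof.
move=> hg.
transitivity (\sum_(0 <= s < m.+1) ((-1) ^+ m * m`!%:R / poch g m) *
   (poch b s / s`!%:R * (poch (1 - g - m%:R) (m - s) / (m - s)`!%:R))).
  apply: eq_big_nat => s /andP[_ sm]; rewrite ltnS in sm.
  have [hs hgs] := poch_neq0_split g s m sm hg.
  have e1 := @pochN F m s sm.
  have e1' : poch (- m%:R) s = (-1) ^+ s * m`!%:R / (m - s)`!%:R :> F.
    have h := fact_neq0 F (m - s); apply: (mulIf h); rewrite e1; by fld.
  have e2 : poch g m = poch g s * poch (g + s%:R) (m - s) by rewrite -pochD subnKC.
  have e3 : (-1) ^+ (m - s) * poch (g + s%:R) (m - s) = poch (1 - g - m%:R) (m - s).
    by rewrite pochR; congr poch; rewrite natrB //; ring.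
  have e4 : (-1) ^+ m = (-1) ^+ s * (-1) ^+ (m - s) :> F by rewrite -exprD subnKC.
  rewrite e1' e4 e2 -e3.
  have h1 := fact_neq0 F s; have h2 := fact_neq0 F (m - s).
  have h3 : (-1) ^+ (m - s) != 0 :> F by rewrite expf_neq0 // oppr_eq0 oner_eq0.
  have hz : forall z : F, z = z * ((-1) ^+ (m - s) * (-1) ^+ (m - s)) by move=> z; rewrite sgn2 mulr1.
  rewrite [LHS]hz; by fld.
rewrite -big_distrr /= -vandF.
have e5 : poch (g - b) m = (-1) ^+ m * poch (b + (1 - g - m%:R)) m.
  by rewrite pochR; congr poch; ring.
rewrite e5; have h := fact_neq0 F m; by fld.
Qed.
End V.

Lemma tri (F : numFieldType) (G : nat -> nat -> F) n :
  \sum_(0 <= k < n.+1) \sum_(0 <= i < (n - k).+1) G (k + i)%N k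
  = \sum_(0 <= m < n.+1) \sum_(0 <= k < m.+1) G m k.
Proof.
elim: n => [|n IH].
  by rewrite !big_nat1.
rewrite big_nat_recr // [RHS]big_nat_recr //= -IH subnn big_nat1 addn0.
rewrite [X in _ = _ + X]big_nat_recr //= addrA; congr (_ + _).
rewrite -big_split /=; apply: eq_big_nat => k /andP[_ kn].
by rewrite subSn // big_nat_recr //= addnS subnKC.
Qed.


Lemma core (F : numFieldType) n (A d g : F) : g = d + n%:R + 1 ->
  (forall k, poch g k != 0) ->
  \sum_(0 <= k < n.+1) poch A k / k`!%:R * poch (d + k%:R) k / poch g k
  = \sum_(0 <= k < n.+1) poch A (n - k) / (n - k)`!%:R
        * poch (1 - A + d + k%:R) k / poch g k.
Proof.
move=> eg hg.
pose G (m k : nat) := poch A m * ((-1) ^+ (n - k) * (n - k)`!%:R /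
   (k`!%:R * (m - k)`!%:R * (n - m)`!%:R * poch g (n - k)))
   * poch (k%:R - d - n%:R - n%:R) (n - m).
transitivity (\sum_(0 <= m < n.+1) \sum_(0 <= k < m.+1) G m k); last first.
  rewrite -tri [RHS]big_nat_rev /=.
  apply: eq_big_nat => k /andP[_ kn]; rewrite ltnS in kn.
  rewrite add0n subSS subKn //.
  have e : (-1) ^+ (n - k) * poch (1 - A + d + (n - k)%:R) (n - k)
     = poch ((A + k%:R) + (k%:R - d - n%:R - n%:R)) (n - k).
    by rewrite pochR; congr poch; rewrite natrB //; ring.
  have e' : poch (1 - A + d + (n - k)%:R) (n - k)
     = (-1) ^+ (n - k) * poch ((A + k%:R) + (k%:R - d - n%:R - n%:R)) (n - k).
    by rewrite -e mulrA sgn2 mul1r.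
  rewrite e'.
  transitivity (\sum_(0 <= i < (n - k).+1)
     (poch A k / k`!%:R * (-1) ^+ (n - k) * (n - k)`!%:R / poch g (n - k)) *
     (poch (A + k%:R) i / i`!%:R * (poch (k%:R - d - n%:R - n%:R) (n - k - i)
        / (n - k - i)`!%:R))).
    apply: eq_big_nat => i /andP[_ ki]; rewrite ltnS in ki.
    rewrite /G addKn subnDA pochD.
    have h1 := fact_neq0 F k; have h2 := fact_neq0 F i.
    have h3 := fact_neq0 F (n - k - i); have h4 := hg (n - k)%N.
    by fld.
  rewrite -big_distrr /= -vandF.
  have h1 := fact_neq0 F k; have h2 := fact_neq0 F (n - k); have h4 := hg (n - k)%N.
  by fld.
apply: eq_big_nat => m /andP[_ mn]; rewrite ltnS in mn.
rewrite [RHS]big_nat_rev /=.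
transitivity (\sum_(0 <= s < m.+1) poch A m / m`!%:R *
   (poch (- m%:R) s * poch ((n - m)%:R + 1) s / (s`!%:R * poch g s))); last first.
  apply: eq_big_nat => s /andP[_ sm]; rewrite ltnS in sm.
  rewrite add0n subSS /G.
  have e1 : (n - (m - s) = n - m + s)%N by lia.
  rewrite e1 subKn //.
  have f1 : (-1) ^+ (n - m) * poch ((m - s)%:R - d - n%:R - n%:R) (n - m)
     = poch (g + s%:R) (n - m).
    by rewrite pochR eg; congr poch; rewrite (natrB _ sm) (natrB _ mn); ring.
  have f1' : poch ((m - s)%:R - d - n%:R - n%:R) (n - m)
     = (-1) ^+ (n - m) * poch (g + s%:R) (n - m).
    by rewrite -f1 mulrA sgn2 mul1r.
  have f2 : poch g (n - m + s) = poch g s * poch (g + s%:R) (n - m).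
    by rewrite addnC pochD.
  have f3 := poch_fact F (n - m) s.
  have f4 := @pochN F m s sm.
  have h5 := fact_neq0 F (m - s).
  have f4' : poch (- m%:R) s = (-1) ^+ s * m`!%:R / (m - s)`!%:R :> F.
    by apply: (mulIf h5); rewrite f4; fld.
  rewrite f1' f2 exprD -f3 f4'.
  have hz : forall z : F, z = z * ((-1) ^+ (n - m) * (-1) ^+ (n - m)).
    by move=> z; rewrite sgn2 mulr1.
  rewrite [LHS]hz.
  have [h6 h7] := poch_neq0_split F g s (s + (n - m)) (leq_addr _ _) (hg _).
  rewrite addKn in h7.
  have h1 := fact_neq0 F m; have h2 := fact_neq0 F s; have h3 := fact_neq0 F (n - m).
  by fld.
rewrite -big_distrr /= chu ?hg //.
have -> : g - ((n - m)%:R + 1) = d + m%:R by rewrite eg natrB //; ring.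
have h1 := fact_neq0 F m; have h4 := hg m.
by fld.
Qed.

Lemma main_gen (F : numFieldType) (n : nat) (a b : F) :
  admissible_lower (- b - n.*2%:R) ->
  admissible_lower (1 - b - n%:R) ->
  admissible_lower (1 + a - b) ->
  admissible_lower (1 + a + n%:R) ->
  poch (1 + a) n != 0 ->
  hypF_trunc [:: - b / 2%:R - n%:R; (1 - b) / 2%:R - n%:R; - a - n.*2%:R]
             [:: - b - n.*2%:R; 1 - b - n%:R] 4%:R n
  = (-1) ^+ n * poch (1 + a) n.*2 / (n`!%:R * poch (1 + a) n) *
    hypF_trunc [:: - n%:R; (1 + a - b) / 2%:R; (2%:R + a - b) / 2%:R; 1]
               [:: 1 + a - b; 1 - b - n%:R; 1 + a + n%:R] 4%:R n.
Proof.
move=> H1 H2 H3 H4 H5.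
have h2 : (2%:R : F) != 0 by rewrite pnatr_eq0.
have e2n : n.*2%:R = 2%:R * n%:R :> F by rewrite -mul2n natrM.
set x := - b - n.*2%:R; set A := - a - n.*2%:R; set g := 1 - b - n%:R.
set y := 1 + a - b.
have eg : g = x + n%:R + 1 by rewrite /g /x e2n; ring.
have hg : forall k, poch g k != 0 by move=> k; exact: adm_poch.
have hx : forall k, poch x k != 0 by move=> k; exact: adm_poch.
have hy : forall k, poch y k != 0 by move=> k; exact: adm_poch.
have ha : forall k, poch (1 + a + n%:R) k != 0 by move=> k; exact: adm_poch.
rewrite /hypF_trunc.
transitivity (\sum_(0 <= k < n.+1) poch A k / k`!%:R * poch (x + k%:R) k / poch g k).
  apply: eq_big_nat => k _.
  have D := poch_dup F x k.
  have D' : poch (x / 2%:R) k * poch ((x + 1) / 2%:R) k * 4%:R ^+ k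
       = poch x k * poch (x + k%:R) k by rewrite D -addnn pochD.
  have eu1 : - b / 2%:R - n%:R = x / 2%:R by rewrite /x e2n; field.
  have eu2 : (1 - b) / 2%:R - n%:R = (x + 1) / 2%:R by rewrite /x e2n; field.
  have hk := fact_neq0 F k; have hxk := hx k; have hgk := hg k.
  rewrite /hyp_term !big_cons !big_nil eu1 eu2.
  have -> : poch (x / 2%:R) k * (poch ((x + 1) / 2%:R) k * (poch A k * 1)) /
     (k`!%:R * (poch x k * (poch g k * 1))) * 4%:R ^+ k
     = (poch (x / 2%:R) k * poch ((x + 1) / 2%:R) k * 4%:R ^+ k) * poch A k /
     (k`!%:R * (poch x k * poch g k)) by fld.
  rewrite D'; by fld.
rewrite (@core F n A x g eg hg) big_distrr /=.
apply: eq_big_nat => k /andP[_ kn]; rewrite ltnS in kn.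
have D := poch_dup F y k.
have D' : poch (y / 2%:R) k * poch ((y + 1) / 2%:R) k * 4%:R ^+ k
     = poch y k * poch (y + k%:R) k by rewrite D -addnn pochD.
have ev : (2%:R + a - b) / 2%:R = (y + 1) / 2%:R by rewrite /y; field.
have hk := fact_neq0 F k; have hyk := hy k; have hgk := hg k; have hak := ha k.
rewrite /hyp_term !big_cons !big_nil ev.
have -> : poch (- n%:R) k * (poch (y / 2%:R) k * (poch ((y + 1) / 2%:R) k *
     (poch 1 k * 1))) / (k`!%:R * (poch y k * (poch g k * (poch (1 + a + n%:R) k * 1))))
     * 4%:R ^+ k
   = (poch (y / 2%:R) k * poch ((y + 1) / 2%:R) k * 4%:R ^+ k) * poch (- n%:R) k
     * poch 1 k / (k`!%:R * (poch y k * poch g k * poch (1 + a + n%:R) k)) by fld.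
rewrite D' poch1.
have r1 : poch (1 + a) n.*2 = poch (1 + a) n * poch (1 + a + n%:R) n
  by rewrite -addnn pochD.
have r4 : poch (1 + a + n%:R) n
   = poch (1 + a + n%:R) k * poch (1 + a + n%:R + k%:R) (n - k)
  by rewrite -pochD subnKC.
have r5 := @pochN F n k kn.
have hnk := fact_neq0 F (n - k).
have r5' : poch (- n%:R) k = (-1) ^+ k * n`!%:R / (n - k)`!%:R :> F.
  by apply: (mulIf hnk); rewrite r5; fld.
have r6 : (-1) ^+ (n - k) * poch (1 + a + n%:R + k%:R) (n - k) = poch A (n - k).
  by rewrite pochR /A; congr poch; rewrite natrB // e2n; ring.
have ey : 1 - A + x + k%:R = y + k%:R by rewrite /A /x /y; ring.
have es : (-1) ^+ n = (-1) ^+ (n - k) * (-1) ^+ k :> F by rewrite -exprD subnK.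
rewrite -r6 ey r1 r4 r5' es.
have hz : forall z : F, z = z * ((-1) ^+ k * (-1) ^+ k).
  by move=> z; rewrite sgn2 mulr1.
rewrite [LHS]hz.
have hn := fact_neq0 F n.
by fld.
Qed.

Theorem mainTheorem11 (R : realType) (n : nat) (a b : R[i]) :
  admissible_lower (- b - n.*2%:R) ->
  admissible_lower (1 - b - n%:R) ->
  admissible_lower (1 + a - b) ->
  admissible_lower (1 + a + n%:R) ->
  poch (1 + a) n != 0 ->
  hypF_trunc [:: - b / 2%:R - n%:R; (1 - b) / 2%:R - n%:R; - a - n.*2%:R]
             [:: - b - n.*2%:R; 1 - b - n%:R] 4%:R n
  = (-1) ^+ n * poch (1 + a) n.*2 / (n`!%:R * poch (1 + a) n) *
    hypF_trunc [:: - n%:R; (1 + a - b) / 2%:R; (2%:R + a - b) / 2%:R; 1]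
               [:: 1 + a - b; 1 - b - n%:R; 1 + a + n%:R] 4%:R n.
Proof. exact: main_gen. Qed.
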